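(* Let $f$ be a periodic traveling wave of speed $c$ ($c^2\neq1$). If $|\operatorname{Re}\lambda|$ is sufficiently large, then $\operatorname{sgn}(G_p(\lambda))=\operatorname{sgn}(\gamma)$; i.e. $G_p(\lambda)>0$ for superluminal waves and $G_p(\lambda)<0$ for subluminal waves.
   Context: A traveling wave of speed $c$ ($c^2\neq1$) is a real solution $f$ of $(c^2-1)f''+\sin f=0$, with energy $E$ given by $\tfrac12(c^2-1)(f')^2+1-\cos f=E$; it is subluminal if $c^2<1$, superluminal if $c^2>1$; periodic traveling waves are librational ($0<E<2$) or rotational ($E<0$ if $c^2<1$, $E>2$ if $c^2>1$), with fundamental period $T$ (smallest $T>0$ with $f(z+T)=f(z)\pmod{2\pi}$). Let $\gamma=1/(c^2-1)$. Equation (P): $p''-2c\gamma\lambda p'+\gamma(\lambda^2+\cos f(z))p=0$, written as a first-order system for $(p,p')$ with fundamental matrix $F(z;\lambda)$, $F(0;\lambda)=I$; its Floquet multipliers $\rho_\pm(\lambda)$ are the eigenvalues of $F(T;\lambda)$. Define $G_p(\lambda)=\log|\rho_+(\lambda)|\log|\rho_-(\lambda)|$. *)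

(* Defs.v *)
From Stdlib Require Import Reals.
From Coquelicot Require Import Coquelicot.
Open Scope R_scope.

Definition gam (c : R) : R := / (c ^ 2 - 1).

Definition traveling_wave (c : R) (f : R -> R) : Prop :=
  exists f1 f2 : R -> R, forall z : R,
    is_derive f z (f1 z) /\ is_derive f1 z (f2 z) /\
    (c ^ 2 - 1) * f2 z + sin (f z) = 0.

Definition period_mod2pi (f : R -> R) (T : R) : Prop :=
  forall z : R, exists k : Z, f (z + T) = f z + 2 * PI * IZR k.

Definition fundamental_period (f : R -> R) (T : R) : Prop :=
  0 < T /\ period_mod2pi f T /\
  (forall T' : R, 0 < T' < T -> ~ period_mod2pi f T').

Definition periodic_tw (c : R) (f : R -> R) (T : R) : Prop :=
  traveling_wave c f /\ fundamental_period f T.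

(* Coefficient matrix of equation (P) as a first-order system for (p, p'):
   (p, p')' = A(z) (p, p'),
   A = [[0, 1], [-gamma (lambda^2 + cos f), 2 c gamma lambda]]. Indices 0,1. *)
Definition Acoef (c : R) (f : R -> R) (lam : C) (z : R) (i k : nat) : C :=
  match i, k with
  | 0%nat, 0%nat => RtoC 0
  | 0%nat, 1%nat => RtoC 1
  | 1%nat, 0%nat => Copp (Cmult (RtoC (gam c)) (Cplus (Cmult lam lam) (RtoC (cos (f z)))))
  | 1%nat, 1%nat => Cmult (RtoC (2 * c * gam c)) lam
  | _, _ => RtoC 0
  end.

Definition fundamental_matrix (c : R) (f : R -> R) (lam : C)
    (F : R -> nat -> nat -> C) : Prop :=
  (forall i j : nat, (i < 2)%nat -> (j < 2)%nat ->
     F 0 i j = if Nat.eqb i j then RtoC 1 else RtoC 0) /\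
  (forall (z : R) (i j : nat), (i < 2)%nat -> (j < 2)%nat ->
     is_derive (fun s => F s i j) z
       (Cplus (Cmult (Acoef c f lam z i 0) (F z 0%nat j))
              (Cmult (Acoef c f lam z i 1) (F z 1%nat j)))).

Definition eigenvalues2 (M : nat -> nat -> C) (r1 r2 : C) : Prop :=
  forall x : C,
    Cmult (Cminus x r1) (Cminus x r2) =
    Cminus (Cmult (Cminus x (M 0%nat 0%nat)) (Cminus x (M 1%nat 1%nat)))
           (Cmult (M 0%nat 1%nat) (M 1%nat 0%nat)).

Definition Gp (r1 r2 : C) : R := ln (Cmod r1) * ln (Cmod r2).

Definition sgn (x : R) : R :=
  if Rlt_dec 0 x then 1 else if Rlt_dec x 0 then -1 else 0.

(* Main.v *)
Require Import Defs.
From Stdlib Require Import Reals Lra Lia.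
From Coquelicot Require Import Coquelicot.
Open Scope R_scope.

Lemma dRe (f : R -> C) x l : is_derive f x l -> is_derive (fun s => Re (f s)) x (Re l).
Proof.
  intros H. unfold is_derive in *.
  eapply filterdiff_ext_lin.
  apply (filterdiff_comp f (fun t : C => fst t) _ (fun t : C => fst t) H).
  apply filterdiff_linear. apply is_linear_fst.
  intros y. destruct l. reflexivity.
Qed.

Lemma dIm (f : R -> C) x l : is_derive f x l -> is_derive (fun s => Im (f s)) x (Im l).
Proof.
  intros H. unfold is_derive in *.
  eapply filterdiff_ext_lin.
  apply (filterdiff_comp f (fun t : C => snd t) _ (fun t : C => snd t) H).
  apply filterdiff_linear. apply is_linear_snd.
  intros y. destruct l. reflexivity.
Qed.

Lemma dC (f : R -> C) x l : is_derive (fun s => Re (f s)) x (Re l) ->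
  is_derive (fun s => Im (f s)) x (Im l) -> is_derive f x l.
Proof.
  intros H1 H2. unfold is_derive in *.
  assert (H := filterdiff_comp_2 (fun s => Re (f s)) (fun s => Im (f s))
     (fun u v => (u, v) : C) _ _ (fun u v => (u, v) : C) H1 H2).
  simpl in H.
  assert (H3 : filterdiff (fun y : R => (Re (f y), Im (f y)) : C) (locally x)
    (fun y : R => (scal y (Re l), scal y (Im l)) : C)).
  { apply H. apply filterdiff_linear.
    eapply is_linear_ext. 2: apply is_linear_id. intros [a b]; reflexivity. }
  eapply filterdiff_ext_lin.
  eapply (filterdiff_ext _ f). 2: apply H3.
  - intros y. unfold Re, Im. destruct (f y); reflexivity.
  - intros y. destruct l; reflexivity.
Qed.

Lemma dR_ext (h k : R -> R) x a b : is_derive h x a -> (forall s, h s = k s) -> a = b -> is_derive k x b.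
Proof. intros H E ->. eapply is_derive_ext; eauto. Qed.

Lemma dC_ext (h k : R -> C) x a b : is_derive h x a -> (forall s, h s = k s) -> a = b -> is_derive k x b.
Proof. intros H E ->. eapply is_derive_ext; eauto. Qed.

Lemma dmultR (f g : R -> R) x a b : is_derive f x a -> is_derive g x b ->
  is_derive (fun s => f s * g s) x (a * g x + f x * b).
Proof. intros H1 H2. apply (is_derive_mult f g x a b H1 H2). intros; apply Rmult_comm. Qed.

Lemma dminusR (f g : R -> R) x a b : is_derive f x a -> is_derive g x b ->
  is_derive (fun s => f s - g s) x (a - b).
Proof. intros H1 H2. apply (is_derive_minus f g x a b H1 H2). Qed.

Lemma dplusR (f g : R -> R) x a b : is_derive f x a -> is_derive g x b ->
  is_derive (fun s => f s + g s) x (a + b).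
Proof. intros H1 H2. apply (is_derive_plus f g x a b H1 H2). Qed.

Lemma dmultC (f g : R -> C) x a b : is_derive f x a -> is_derive g x b ->
  is_derive (fun s => f s * g s)%C x (a * g x + f x * b)%C.
Proof.
  intros H1 H2. apply dC.
  - eapply dR_ext.
    apply (dminusR _ _ x _ _ (dmultR _ _ x _ _ (dRe f x a H1) (dRe g x b H2)) (dmultR _ _ x _ _ (dIm f x a H1) (dIm g x b H2))).
    intros s; simpl; reflexivity.
    unfold plus, mult, minus, opp; simpl; unfold Re, Im; lra.
  - eapply dR_ext.
    apply (dplusR _ _ x _ _ (dmultR _ _ x _ _ (dRe f x a H1) (dIm g x b H2)) (dmultR _ _ x _ _ (dIm f x a H1) (dRe g x b H2))).
    intros s; simpl; reflexivity.
    unfold plus, mult, minus, opp; simpl; unfold Re, Im; lra.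
Qed.

Lemma dplusC (f g : R -> C) x a b : is_derive f x a -> is_derive g x b ->
  is_derive (fun s => f s + g s)%C x (a + b)%C.
Proof. intros H1 H2. apply (is_derive_plus f g x a b H1 H2). Qed.

Lemma dminusC (f g : R -> C) x a b : is_derive f x a -> is_derive g x b ->
  is_derive (fun s => f s - g s)%C x (a - b)%C.
Proof. intros H1 H2. apply (is_derive_minus f g x a b H1 H2). Qed.

Lemma dconstC (k : C) (x : R) : @is_derive R_AbsRing C_R_NormedModule (fun _ : R => k) x (RtoC 0).
Proof. apply (@is_derive_const R_AbsRing C_R_NormedModule k x). Qed.

Lemma dscalC (k : C) (f : R -> C) x a : is_derive f x a ->
  is_derive (fun s => k * f s)%C x (k * a)%C.
Proof.
  intros H. eapply dC_ext. apply dmultC. apply dconstC. apply H.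
  intros; reflexivity. apply injective_projections; simpl; ring.
Qed.

Definition ex (k : C) (t : R) : C :=
  (exp (Re k * t) * cos (Im k * t), exp (Re k * t) * sin (Im k * t)).

Lemma dex_rev (k : C) (T z : R) :
  is_derive (fun s => ex k (T - s)) z (- (k * ex k (T - z)))%C.
Proof.
  destruct k as [kr ki]. apply dC; unfold ex; simpl.
  - auto_derive; auto. unfold Rminus; ring.
  - auto_derive; auto. unfold Rminus; ring.
Qed.

Lemma Cmod_sq (z : C) : Cmod z ^ 2 = Re z ^ 2 + Im z ^ 2.
Proof.
  unfold Cmod. rewrite pow2_sqrt. reflexivity.
  destruct z; simpl; nra.
Qed.

Lemma Cmod_ex k t : Cmod (ex k t) = exp (Re k * t).
Proof.
  destruct k as [a b]. unfold Cmod, ex, Re, Im; simpl.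
  assert (H := sin2_cos2 (b * t)). unfold Rsqr in H.
  replace (exp (a * t) * cos (b * t) * (exp (a * t) * cos (b * t) * 1) +
     exp (a * t) * sin (b * t) * (exp (a * t) * sin (b * t) * 1))
    with (Rsqr (exp (a * t))) by (unfold Rsqr; nra).
  apply sqrt_Rsqr. left; apply exp_pos.
Qed.

Lemma ex0 k : ex k 0 = RtoC 1.
Proof.
  unfold ex. rewrite !Rmult_0_r, exp_0, cos_0, sin_0. apply injective_projections; simpl; ring.
Qed.

Lemma Re_le_Cmod (z : C) : Re z <= Cmod z.
Proof.
  assert (H := Rmax_Cmod z). unfold Re.
  assert (Rabs (fst z) <= Cmod z) by (eapply Rle_trans; [apply Rmax_l | apply H]).
  apply Rabs_le_between in H0. lra.
Qed.

Lemma MVT_C (phi dphi : R -> C) (T B : R) :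
  0 <= T ->
  (forall z, 0 <= z <= T -> is_derive phi z (dphi z)) ->
  (forall z, 0 <= z <= T -> Cmod (dphi z) <= B) ->
  Cmod (phi T - phi 0)%C <= B * T.
Proof.
  intros HT Hd HB.
  set (w := (phi T - phi 0)%C).
  destruct (Ceq_dec w (RtoC 0)) as [Hw|Hw].
  { rewrite Hw, Cmod_0. destruct (Req_dec T 0) as [->|HT'].
    lra. assert (0 <= Cmod (dphi 0)) by apply Cmod_ge_0.
    assert (Cmod (dphi 0) <= B) by (apply HB; lra). nra. }
  set (u := (Cconj w / RtoC (Cmod w))%C).
  assert (Hm : 0 < Cmod w) by (apply Cmod_gt_0; auto).
  destruct (Req_dec T 0) as [HT0|HT'].
  { exfalso. apply Hw. unfold w. rewrite HT0. apply injective_projections; simpl; ring. }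
  assert (Hc : exists c, Re (u * phi T)%C - Re (u * phi 0)%C = Re (u * dphi c)%C * (T - 0) /\ 0 < c < T).
  { apply (MVT_cor2 (fun s => Re (u * phi s)%C) (fun s => Re (u * dphi s)%C)). lra.
    intros c Hc. apply is_derive_Reals. apply dRe. apply dscalC. apply Hd; auto. }
  destruct Hc as [c [Hc1 Hc2]].
  assert (E : Re (u * phi T)%C - Re (u * phi 0)%C = Cmod w).
  { replace (Re (u * phi T)%C - Re (u * phi 0)%C) with (Re (u * w)%C)
      by (unfold w; simpl; ring).
    unfold u. replace (Cconj w / RtoC (Cmod w) * w)%C with (RtoC (Cmod w)).
    reflexivity.
    assert (RtoC (Cmod w) <> RtoC 0).
    { intros E0. apply RtoC_inj in E0. lra. }
    assert (Cconj w * w = RtoC (Cmod w * Cmod w))%C.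
    { assert (Hs := Cmod_sq w). apply injective_projections; simpl; unfold Re, Im in Hs; simpl in Hs; nra. }
    field_simplify_eq; auto. rewrite H0. apply injective_projections; simpl; ring. }
  assert (Re (u * dphi c)%C <= B).
  { eapply Rle_trans. apply Re_le_Cmod. rewrite Cmod_mult.
    unfold u. rewrite Cmod_div. 2:{ intros E0. apply RtoC_inj in E0. lra. }
    rewrite Cmod_R, Rabs_pos_eq by lra.
    replace (Cmod (Cconj w)) with (Cmod w).
    replace (Cmod w / Cmod w) with 1 by (field; lra).
    rewrite Rmult_1_l. apply HB. lra.
    unfold Cmod, Cconj; simpl. f_equal; ring. }
  nra.
Qed.

Lemma gronwall (h dh : R -> R) k T :
  (forall z, 0 <= z <= T -> is_derive h z (dh z)) ->
  (forall z, 0 <= z <= T -> dh z <= k * h z) ->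
  forall z, 0 <= z <= T -> h z <= h 0 * exp (k * z).
Proof.
  intros Hd Hb z Hz.
  destruct (Req_dec z 0) as [->|Hz0].
  { rewrite Rmult_0_r, exp_0. lra. }
  assert (Hc : exists c, h z * exp (- k * z) - h 0 * exp (- k * 0) =
     (dh c * exp (- k * c) + h c * (- k * exp (- k * c))) * (z - 0) /\ 0 < c < z).
  { apply (MVT_cor2 (fun s => h s * exp (- k * s))
      (fun c => dh c * exp (- k * c) + h c * (- k * exp (- k * c)))). lra.
    intros c Hc. apply is_derive_Reals.
    apply (dmultR h (fun s => exp (- k * s))). apply Hd; lra. auto_derive; auto. ring. }
  destruct Hc as [c [Hc1 Hc2]].
  assert (dh c <= k * h c) by (apply Hb; lra).
  assert (0 < exp (- k * c)) by apply exp_pos.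
  assert (h z * exp (- k * z) <= h 0).
  { rewrite Rmult_0_r, exp_0 in Hc1.
    assert (dh c * exp (- k * c) + h c * (- k * exp (- k * c)) = (dh c - k * h c) * exp (- k * c)) by ring.
    assert ((dh c - k * h c) * exp (- k * c) <= 0).
    { apply Rmult_le_0_r; lra. }
    assert ((dh c * exp (- k * c) + h c * (- k * exp (- k * c))) * (z - 0) <= 0).
    { apply Rmult_le_0_r; lra. }
    lra. }
  replace (h z) with (h z * exp (- k * z) * exp (k * z)).
  apply Rmult_le_compat_r. left; apply exp_pos. auto.
  rewrite Rmult_assoc, <- exp_plus. replace (- k * z + k * z) with 0 by ring.
  rewrite exp_0; ring.
Qed.

Definition nsq (w : C) : R := Re w ^ 2 + Im w ^ 2.
Definition dot (a b : C) : R := Re a * Re b + Im a * Im b.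

Lemma dnsq (w : R -> C) z l : is_derive w z l ->
  is_derive (fun s => nsq (w s)) z (2 * dot (w z) l).
Proof.
  intros H. unfold nsq, dot.
  eapply dR_ext.
  apply (dplusR _ _ z _ _ (dmultR _ _ z _ _ (dRe w z l H) (dRe w z l H))
           (dmultR _ _ z _ _ (dIm w z l H) (dIm w z l H))).
  intros s. cbv beta. ring.
  assert (E : forall a b c d : R, b*a + a*b + (d*c + c*d) = 2*(a*b+c*d)) by (intros; ring). apply E.
Qed.

Lemma nsq_Cmod (w : C) : nsq w = Cmod w ^ 2.
Proof. rewrite Cmod_sq. reflexivity. Qed.

Lemma energy_pt (w1 w2 g m1 m2 : C) eps :
  Re m2 <= Re m1 -> 0 <= eps -> Cmod g <= eps ->
  2 * dot w1 (m1 * w1 - g * (w1 - w2))%C + 2 * dot w2 (m2 * w2 - g * (w1 - w2))%C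
  <= (2 * Re m1 + 2 * eps) * (nsq w1 + nsq w2).
Proof.
  intros Hm He Hg.
  assert (Hg2 : nsq g <= eps ^ 2).
  { rewrite nsq_Cmod. assert (0 <= Cmod g) by apply Cmod_ge_0. nra. }
  destruct w1 as [a1 a2], w2 as [b1 b2], g as [g1 g2], m1 as [p1 p2], m2 as [q1 q2].
  unfold dot, nsq, Re, Im in *; simpl in *.
  set (S1 := a1 + b1). set (S2 := a2 + b2). set (D1 := a1 - b1). set (D2 := a2 - b2).
  set (X := S1 * (g1 * D1 - g2 * D2) + S2 * (g1 * D2 + g2 * D1)).
  assert (HX2 : X ^ 2 <= (g1 ^ 2 + g2 ^ 2) * ((S1 ^ 2 + S2 ^ 2) * (D1 ^ 2 + D2 ^ 2))).
  { set (Y1 := g1 * D1 - g2 * D2). set (Y2 := g1 * D2 + g2 * D1).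
    assert (EY : Y1 ^ 2 + Y2 ^ 2 = (g1 ^ 2 + g2 ^ 2) * (D1 ^ 2 + D2 ^ 2)) by (unfold Y1, Y2; ring).
    assert (EX : (S1 ^ 2 + S2 ^ 2) * (Y1 ^ 2 + Y2 ^ 2) - X ^ 2 = (S1 * Y2 - S2 * Y1) ^ 2)
      by (unfold X, Y1, Y2; ring).
    assert (0 <= (S1 * Y2 - S2 * Y1) ^ 2) by apply pow2_ge_0.
    replace ((g1 ^ 2 + g2 ^ 2) * ((S1 ^ 2 + S2 ^ 2) * (D1 ^ 2 + D2 ^ 2)))
      with ((S1 ^ 2 + S2 ^ 2) * (Y1 ^ 2 + Y2 ^ 2)) by (rewrite EY; ring).
    lra. }
  set (nS := S1 ^ 2 + S2 ^ 2). set (nD := D1 ^ 2 + D2 ^ 2).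
  assert (HnS : 0 <= nS) by (unfold nS; nra).
  assert (HnD : 0 <= nD) by (unfold nD; nra).
  assert (HX : - X <= eps * (nS + nD) / 2).
  { assert (HY : eps ^ 2 * (nS * nD) <= (eps * (nS + nD) / 2) ^ 2).
    { assert (0 <= (eps * (nS - nD)) ^ 2) by apply pow2_ge_0.
      assert ((eps * (nS + nD) / 2) ^ 2 - eps ^ 2 * (nS * nD) = (eps * (nS - nD)) ^ 2 / 4) by field.
      lra. }
    assert (0 <= eps * (nS + nD) / 2) by nra.
    assert (X ^ 2 <= eps ^ 2 * (nS * nD)).
    { eapply Rle_trans. apply HX2. apply Rmult_le_compat_r. nra. lra. }
    nra. }
  assert (nS + nD = 2 * (a1 * (a1 * 1) + a2 * (a2 * 1) + (b1 * (b1 * 1) + b2 * (b2 * 1)))).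
  { unfold nS, nD, S1, S2, D1, D2. ring. }
  match goal with |- ?L <= ?Rr =>
    replace L with (2 * p1 * (a1^2 + a2^2) + 2 * q1 * (b1^2+b2^2) - 2 * X)
      by (unfold X, S1, S2, D1, D2; ring);
    replace Rr with ((2 * p1 + 2 * eps) * (a1^2 + a2^2 + (b1^2+b2^2))) by ring end.
  assert (q1 * (b1^2+b2^2) <= p1 * (b1^2+b2^2)) by (apply Rmult_le_compat_r; nra).
  assert (nS + nD = 2 * (a1^2 + a2^2 + (b1^2+b2^2))) by (rewrite H; ring).
  nra.
Qed.

Lemma exp_le (x y : R) : x <= y -> exp x <= exp y.
Proof. intros [H|H]. left; apply exp_increasing; auto. subst; lra. Qed.

Lemma energy (w1 w2 g : R -> C) m1 m2 eps T :
  Re m2 <= Re m1 -> 0 <= eps -> (forall z, Cmod (g z) <= eps) ->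
  (forall z, is_derive w1 z (m1 * w1 z - g z * (w1 z - w2 z))%C) ->
  (forall z, is_derive w2 z (m2 * w2 z - g z * (w1 z - w2 z))%C) ->
  forall z, 0 <= z <= T ->
  nsq (w1 z) + nsq (w2 z) <= (nsq (w1 0) + nsq (w2 0)) * exp ((2 * Re m1 + 2 * eps) * z).
Proof.
  intros Hm He Hg H1 H2.
  apply (gronwall (fun s => nsq (w1 s) + nsq (w2 s))
    (fun s => 2 * dot (w1 s) (m1 * w1 s - g s * (w1 s - w2 s))%C +
              2 * dot (w2 s) (m2 * w2 s - g s * (w1 s - w2 s))%C)).
  - intros z _. apply dplusR; apply dnsq; auto.
  - intros z _. apply energy_pt; auto.
Qed.

Lemma nsq_ge0 w : 0 <= nsq w.
Proof. unfold nsq. nra. Qed.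

Lemma sq_le (a b : R) : 0 <= a -> 0 <= b -> a ^ 2 <= b ^ 2 -> a <= b.
Proof. intros. nra. Qed.

Lemma Cmod_diff_bound (a b : C) y :
  nsq a + nsq b <= exp (2 * y) -> Cmod (a - b)%C <= sqrt 2 * exp y.
Proof.
  intros H. apply sq_le. apply Cmod_ge_0.
  apply Rmult_le_pos. apply sqrt_pos. left; apply exp_pos.
  rewrite <- nsq_Cmod.
  replace ((sqrt 2 * exp y) ^ 2) with (2 * exp (2 * y)).
  2:{ replace (2 * y) with (y + y) by ring. rewrite exp_plus.
      simpl. rewrite Rmult_1_r. replace (sqrt 2 * exp y * (sqrt 2 * exp y)) with
        ((sqrt 2 * sqrt 2) * (exp y * exp y)) by ring. rewrite sqrt_sqrt by lra. ring. }
  assert (nsq (a - b)%C <= 2 * (nsq a + nsq b)).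
  { destruct a as [a1 a2], b as [b1 b2]. unfold nsq, Re, Im; simpl. assert (0 <= (a1+b1)^2) by apply pow2_ge_0. assert (0 <= (a2+b2)^2) by apply pow2_ge_0. nra. }
  lra.
Qed.

Ltac cring := cbv beta; match goal with |- ?a = ?b => change (@eq C a b) end; ring.

Lemma first_sol (w1 w2 g : R -> C) m1 m2 eps T :
  Re m2 <= Re m1 -> 0 <= eps -> 0 <= T -> (forall z, Cmod (g z) <= eps) ->
  (forall z, is_derive w1 z (m1 * w1 z - g z * (w1 z - w2 z))%C) ->
  (forall z, is_derive w2 z (m2 * w2 z - g z * (w1 z - w2 z))%C) ->
  w1 0 = RtoC 1 -> w2 0 = RtoC 0 ->
  Cmod (w1 T - ex m1 T)%C <= sqrt 2 * eps * exp (eps * T) * exp (Re m1 * T) * T /\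
  Cmod (w2 T) <= sqrt 2 * eps * exp (eps * T) * exp (Re m1 * T) * T.
Proof.
  intros Hm He HT Hg H1 H2 I1 I2.
  assert (En := energy w1 w2 g m1 m2 eps T Hm He Hg H1 H2).
  assert (Hd : forall z, 0 <= z <= T -> Cmod (w1 z - w2 z)%C <= sqrt 2 * exp ((Re m1 + eps) * z)).
  { intros z Hz. apply Cmod_diff_bound. eapply Rle_trans. apply En; auto.
    rewrite I1, I2. unfold nsq; simpl. right. replace (2 * ((Re m1 + eps) * z)) with ((2 * Re m1 + 2 * eps) * z) by ring. ring. }
  assert (Hb : forall (m : C) z, Re m <= Re m1 -> 0 <= z <= T ->
     Cmod (- (ex m (T - z) * (g z * (w1 z - w2 z))))%C <=
     sqrt 2 * eps * exp (eps * T) * exp (Re m1 * T)).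
  { intros m z Hmm Hz. rewrite Cmod_opp, !Cmod_mult, Cmod_ex.
    assert (exp (Re m * (T - z)) <= exp (Re m1 * (T - z))).
    { apply exp_le. apply Rmult_le_compat_r; lra. }
    assert (HH := Hd z Hz). assert (HG := Hg z).
    assert (0 <= Cmod (g z)) by apply Cmod_ge_0.
    assert (0 <= Cmod (w1 z - w2 z)%C) by apply Cmod_ge_0.
    assert (0 < exp (Re m * (T - z))) by apply exp_pos.
    apply Rle_trans with (exp (Re m1 * (T - z)) * (eps * (sqrt 2 * exp ((Re m1 + eps) * z)))).
    { apply Rmult_le_compat; try nra. }
    replace (exp (Re m1 * (T - z)) * (eps * (sqrt 2 * exp ((Re m1 + eps) * z))))
      with (sqrt 2 * eps * exp (eps * z) * exp (Re m1 * T)).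
    2:{ replace (Re m1 * T) with (Re m1 * (T - z) + Re m1 * z) by ring.
        replace ((Re m1 + eps) * z) with (Re m1 * z + eps * z) by ring.
        rewrite !exp_plus. ring. }
    assert (exp (eps * z) <= exp (eps * T)).
    { apply exp_le. apply Rmult_le_compat_l; lra. }
    assert (0 <= sqrt 2) by apply sqrt_pos. assert (0 < exp (Re m1 * T)) by apply exp_pos.
    assert (0 <= sqrt 2 * eps) by nra.
    apply Rmult_le_compat_r. lra. apply Rmult_le_compat_l; lra. }
  split.
  - assert (M := MVT_C (fun z => ex m1 (T - z) * w1 z)%C
       (fun z => - (ex m1 (T - z) * (g z * (w1 z - w2 z))))%C T
       (sqrt 2 * eps * exp (eps * T) * exp (Re m1 * T)) HT).
    simpl in M. rewrite Rminus_diag, Rminus_0_r, ex0, I1 in M.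
    replace (w1 T - ex m1 T)%C with (1 * w1 T - ex m1 T * 1)%C by ring.
    apply M.
    + intros z _. eapply dC_ext. apply dmultC. apply dex_rev. apply H1.
      intros; reflexivity. cring.
    + intros z Hz. apply Hb; auto. lra.
  - assert (M := MVT_C (fun z => ex m2 (T - z) * w2 z)%C
       (fun z => - (ex m2 (T - z) * (g z * (w1 z - w2 z))))%C T
       (sqrt 2 * eps * exp (eps * T) * exp (Re m1 * T)) HT).
    simpl in M. rewrite Rminus_diag, Rminus_0_r, ex0, I2 in M.
    replace (w2 T) with (1 * w2 T - ex m2 T * 0)%C by ring.
    apply M.
    + intros z _. eapply dC_ext. apply dmultC. apply dex_rev. apply H2.
      intros; reflexivity. cring.
    + intros z Hz. apply Hb; auto.
Qed.

Lemma second_sol (w1 w2 g : R -> C) m1 m2 eps T :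
  Re m2 <= Re m1 -> 0 <= eps -> 0 <= T -> (forall z, Cmod (g z) <= eps) ->
  (forall z, is_derive w1 z (m1 * w1 z - g z * (w1 z - w2 z))%C) ->
  (forall z, is_derive w2 z (m2 * w2 z - g z * (w1 z - w2 z))%C) ->
  w1 0 = RtoC 0 -> w2 0 = RtoC 1 ->
  Cmod (w1 T) <= exp ((Re m1 + eps) * T).
Proof.
  intros Hm He HT Hg H1 H2 I1 I2.
  assert (En := energy w1 w2 g m1 m2 eps T Hm He Hg H1 H2 T (conj HT (Rle_refl T))).
  rewrite I1, I2 in En. unfold nsq at 3 4 in En. simpl in En.
  apply sq_le. apply Cmod_ge_0. left; apply exp_pos.
  rewrite <- nsq_Cmod.
  replace (exp ((Re m1 + eps) * T) ^ 2) with (exp ((2 * Re m1 + 2 * eps) * T)).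
  assert (0 <= nsq (w2 T)) by apply nsq_ge0. nra.
  simpl. rewrite Rmult_1_r, <- exp_plus. f_equal. ring.
Qed.

Lemma wronsk (X1 X2 Y1 Y2 g : R -> C) m1 m2 T :
  0 <= T ->
  (forall z, is_derive X1 z (m1 * X1 z - g z * (X1 z - X2 z))%C) ->
  (forall z, is_derive X2 z (m2 * X2 z - g z * (X1 z - X2 z))%C) ->
  (forall z, is_derive Y1 z (m1 * Y1 z - g z * (Y1 z - Y2 z))%C) ->
  (forall z, is_derive Y2 z (m2 * Y2 z - g z * (Y1 z - Y2 z))%C) ->
  X1 0 = RtoC 1 -> X2 0 = RtoC 0 -> Y1 0 = RtoC 0 -> Y2 0 = RtoC 1 ->
  Cmod (X1 T * Y2 T - Y1 T * X2 T)%C = exp (Re (m1 + m2) * T).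
Proof.
  intros HT HX1 HX2 HY1 HY2 I1 I2 I3 I4.
  assert (M := MVT_C (fun z => ex (m1 + m2) (T - z) * (X1 z * Y2 z - Y1 z * X2 z))%C
       (fun z => RtoC 0) T 0 HT).
  simpl in M. rewrite Rminus_diag, Rminus_0_r, ex0, I1, I2, I3, I4 in M.
  assert (E : Cmod (1 * (X1 T * Y2 T - Y1 T * X2 T) - ex (m1 + m2) T * (1 * 1 - 0 * 0))%C <= 0 * T).
  { apply M.
    - intros z _. eapply dC_ext. apply dmultC. apply dex_rev.
      apply (dminusC (fun s => X1 s * Y2 s)%C (fun s => Y1 s * X2 s)%C).
      apply (dmultC X1 Y2); auto. apply (dmultC Y1 X2); auto.
      intros; reflexivity. cring.
    - intros; rewrite Cmod_0; lra. }
  assert (E2 : (X1 T * Y2 T - Y1 T * X2 T)%C = ex (m1 + m2) T).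
  { assert (H0 := Cmod_ge_0 (1 * (X1 T * Y2 T - Y1 T * X2 T) - ex (m1 + m2) T * (1 * 1 - 0 * 0))%C).
    rewrite Rmult_0_l in E. assert (H3 := Cmod_eq_0 _ (Rle_antisym _ _ E H0)).
    apply Ceq_minus. rewrite <- H3. ring. }
  rewrite E2, Cmod_ex. reflexivity.
Qed.

Lemma ln2_lt_1 : ln 2 < 1.
Proof.
  rewrite <- (ln_exp 1). apply ln_increasing. lra.
  assert (H := exp_ineq1 1). lra.
Qed.

Lemma ln_le' x y : 0 < x -> x <= y -> ln x <= ln y.
Proof. intros H [H1|H1]. left; apply ln_increasing; auto. subst; lra. Qed.

Lemma log_window (r E : R) : 0 < E -> E / 2 <= r <= 2 * E ->
  ln E - 1 < ln r < ln E + 1.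
Proof.
  intros HE [H1 H2]. assert (L := ln2_lt_1). assert (L2 := ln_lt_2).
  split.
  - assert (ln (E * / 2) <= ln r) by (apply ln_le'; lra).
    rewrite ln_mult, ln_Rinv in H by lra. lra.
  - assert (ln r <= ln (2 * E)) by (apply ln_le'; lra).
    rewrite ln_mult in H by lra. lra.
Qed.

Lemma Cmod_rev (a b : C) : Cmod a - Cmod b <= Cmod (a - b)%C.
Proof.
  assert (H := Cmod_triangle (a - b)%C b).
  replace (a - b + b)%C with a in H by ring. lra.
Qed.

Lemma roots (r1 r2 t W e1 : C) (E q : R) :
  0 < E -> 0 <= q <= 1/8 -> (r1 + r2 = t)%C -> (r1 * r2 = W)%C ->
  Cmod (t - e1)%C <= E / 4 -> Cmod e1 = E -> Cmod W = E * E * (q * q) ->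
  Cmod r2 <= Cmod r1 -> E / 2 <= Cmod r1 <= 2 * E.
Proof.
  intros HE Hq Hs Hp Ht He HW H21.
  assert (HP : Cmod r1 * Cmod r2 = E * E * (q * q)) by (rewrite <- Cmod_mult, Hp; auto).
  assert (0 <= Cmod r2) by apply Cmod_ge_0.
  assert (Hr2 : Cmod r2 <= E * q).
  { assert (Cmod r2 * Cmod r2 <= E * E * (q * q)) by nra.
    assert (0 <= E * q) by nra. nra. }
  assert (Htt : E - E / 4 <= Cmod t).
  { assert (Hx := Cmod_rev e1 t). replace (e1 - t)%C with (- (t - e1))%C in Hx by ring.
    rewrite Cmod_opp in Hx. lra. }
  assert (Htu : Cmod t <= E + E / 4).
  { assert (Hx := Cmod_triangle (t - e1)%C e1). replace (t - e1 + e1)%C with t in Hx by ring. lra. }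
  assert (E1 : r1 = (t - r2)%C) by (rewrite <- Hs; ring).
  split.
  - assert (Hx := Cmod_rev t r2). rewrite <- E1 in Hx. nra.
  - assert (Hx := Cmod_triangle t (- r2)%C). rewrite Cmod_opp in Hx.
    replace (t + - r2)%C with r1 in Hx by (rewrite E1; ring). nra.
Qed.

Lemma sgn_pos x : 0 < x -> sgn x = 1.
Proof. intros. unfold sgn. destruct (Rlt_dec 0 x); lra. Qed.
Lemma sgn_neg x : x < 0 -> sgn x = -1.
Proof. intros. unfold sgn. destruct (Rlt_dec 0 x); destruct (Rlt_dec x 0); lra. Qed.

Lemma sgn_final x y a b gm :
  a - 1 < x < a + 1 -> b - 1 < y < b + 1 -> 1 < Rabs a -> 1 < Rabs b ->
  gm <> 0 -> (0 < a * b <-> 0 < gm) ->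
  sgn (x * y) = sgn gm.
Proof.
  intros Hx Hy Ha Hb Hg Hab.
  assert (Ha' : (1 < a /\ 0 < x) \/ (a < -1 /\ x < 0)).
  { destruct (Rle_dec 0 a). rewrite Rabs_pos_eq in Ha by lra. left; lra.
    rewrite Rabs_left in Ha by lra. right; lra. }
  assert (Hb' : (1 < b /\ 0 < y) \/ (b < -1 /\ y < 0)).
  { destruct (Rle_dec 0 b). rewrite Rabs_pos_eq in Hb by lra. left; lra.
    rewrite Rabs_left in Hb by lra. right; lra. }
  destruct (Rlt_dec 0 gm) as [Hp|Hp].
  - rewrite (sgn_pos gm Hp). apply sgn_pos. apply Hab in Hp.
    destruct Ha' as [[]|[]], Hb' as [[]|[]]; nra.
  - assert (gm < 0) by lra. rewrite (sgn_neg gm H). apply sgn_neg.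
    assert (~ 0 < a * b) by (intros Hc; apply Hab in Hc; lra).
    destruct Ha' as [[]|[]], Hb' as [[]|[]]; nra.
Qed.

Lemma wsys (p q A10 A11 g : R -> C) (m1 m2 : C) :
  (forall z, is_derive p z (q z)) ->
  (forall z, is_derive q z (A10 z * p z + A11 z * q z)%C) ->
  (forall z, A11 z = (m1 + m2)%C) ->
  (forall z, A10 z = (- (m1 * m2) - g z * (m1 - m2))%C) ->
  (forall z, is_derive (fun s => q s - m2 * p s)%C z
     (m1 * (q z - m2 * p z) - g z * ((q z - m2 * p z) - (q z - m1 * p z)))%C) /\
  (forall z, is_derive (fun s => q s - m1 * p s)%C z
     (m2 * (q z - m1 * p z) - g z * ((q z - m2 * p z) - (q z - m1 * p z)))%C).
Proof.
  intros Hp Hq E11 E10. split; intros z.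
  - eapply dC_ext. apply (dminusC q (fun s => m2 * p s)%C). apply Hq. apply dscalC. apply Hp.
    intros; reflexivity. rewrite E11, E10. cring.
  - eapply dC_ext. apply (dminusC q (fun s => m1 * p s)%C). apply Hq. apply dscalC. apply Hp.
    intros; reflexivity. rewrite E11, E10. cring.
Qed.

Lemma colcomb c f lam F (a b : C) : fundamental_matrix c f lam F ->
  (forall z, is_derive (fun s => F s 0%nat 0%nat * a + F s 0%nat 1%nat * b)%C z
       (F z 1%nat 0%nat * a + F z 1%nat 1%nat * b)%C) /\
  (forall z, is_derive (fun s => F s 1%nat 0%nat * a + F s 1%nat 1%nat * b)%C z
       (Acoef c f lam z 1 0 * (F z 0%nat 0%nat * a + F z 0%nat 1%nat * b) +
        Acoef c f lam z 1 1 * (F z 1%nat 0%nat * a + F z 1%nat 1%nat * b))%C).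
Proof.
  intros [_ HF]. split; intros z.
  - eapply dC_ext.
    apply (dplusC (fun s => F s 0%nat 0%nat * a)%C (fun s => F s 0%nat 1%nat * b)%C).
    apply (dmultC (fun s => F s 0%nat 0%nat) (fun _ => a)). apply HF; lia. apply dconstC.
    apply (dmultC (fun s => F s 0%nat 1%nat) (fun _ => b)). apply HF; lia. apply dconstC.
    intros; reflexivity. simpl Acoef. cring.
  - eapply dC_ext.
    apply (dplusC (fun s => F s 1%nat 0%nat * a)%C (fun s => F s 1%nat 1%nat * b)%C).
    apply (dmultC (fun s => F s 1%nat 0%nat) (fun _ => a)). apply HF; lia. apply dconstC.
    apply (dmultC (fun s => F s 1%nat 1%nat) (fun _ => b)). apply HF; lia. apply dconstC.
    intros; reflexivity. cring.
Qed.

Lemma Re_mult_R (l : C) (r : R) : Re (l * RtoC r)%C = Re l * r.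
Proof. destruct l; simpl; ring. Qed.

Lemma exp_bound1 x : x <= 1 -> exp x <= 3.
Proof. intros. eapply Rle_trans. apply exp_le. apply H. apply exp_le_3. Qed.

Lemma sqrt2_le : sqrt 2 <= 3 / 2.
Proof.
  apply sq_le. apply sqrt_pos. lra.
  simpl. rewrite Rmult_1_r, sqrt_sqrt; lra.
Qed.

Theorem lemma3p14 :
  forall (c : R) (f : R -> R) (T : R),
    c ^ 2 <> 1 ->
    periodic_tw c f T ->
    exists M : R, forall lam : C,
      M < Rabs (Re lam) ->
      forall F : R -> nat -> nat -> C,
        fundamental_matrix c f lam F ->
        forall rp rm : C,
          eigenvalues2 (F T) rp rm ->
          sgn (Gp rp rm) = sgn (gam c).
Proof.
  intros c f T hc [_ [HT _]].
  set (gm := gam c).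
  assert (Hc1 : c ^ 2 - 1 <> 0) by lra.
  assert (Hg1 : gm * (c ^ 2 - 1) = 1) by (unfold gm, gam; field; auto).
  assert (Hg0 : gm <> 0) by (intros E; rewrite E in Hg1; lra).
  assert (Hcp : c + 1 <> 0) by (intros E; apply hc; replace c with (-1) by lra; ring).
  assert (Hcm : c - 1 <> 0) by (intros E; apply hc; replace c with 1 by lra; ring).
  set (m := Rmin (Rabs (c + 1)) (Rabs (c - 1))).
  assert (Hm : 0 < m).
  { unfold m. apply Rmin_glb_lt; apply Rabs_pos_lt; auto. }
  assert (Hag : 0 < Rabs gm) by (apply Rabs_pos_lt; auto).
  exists (80 * T + 2 + 14 / (Rabs gm * T) + 2 / (Rabs gm * T * m)).
  intros lam Hlam F HF rp rm Heig.
  set (sg := Re lam).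
  assert (P1 : 0 < 14 / (Rabs gm * T)) by (apply Rdiv_lt_0_compat; nra).
  assert (P2 : 0 < 2 / (Rabs gm * T * m)).
  { apply Rdiv_lt_0_compat. lra. apply Rmult_lt_0_compat; nra. }
  fold sg in Hlam.
  assert (Hs80 : 80 * T < Rabs sg) by lra.
  assert (Hs14 : 14 <= Rabs gm * T * Rabs sg).
  { assert (14 / (Rabs gm * T) < Rabs sg) by lra.
    apply Rmult_lt_compat_l with (r := Rabs gm * T) in H; [|nra].
    field_simplify in H; nra. }
  assert (Hs2 : 2 <= Rabs gm * T * m * Rabs sg).
  { assert (2 / (Rabs gm * T * m) < Rabs sg) by lra.
    apply Rmult_lt_compat_l with (r := Rabs gm * T * m) in H; [|apply Rmult_lt_0_compat; nra].
    field_simplify in H; try nra. }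
  set (s := if Rlt_dec 0 (gm * sg) then 1 else -1).
  assert (Hs : s * s = 1 /\ s * (gm * sg) = Rabs gm * Rabs sg /\ 0 < s * (gm * sg)).
  { unfold s. rewrite <- Rabs_mult. destruct (Rlt_dec 0 (gm * sg)).
    - rewrite Rabs_pos_eq by lra. lra.
    - assert (gm * sg <> 0) by (apply Rmult_integral_contrapositive; split; auto;
        intros E; rewrite E, Rabs_R0 in Hs80; lra).
      rewrite Rabs_left by lra. lra. }
  destruct Hs as [Hss [Hsa Hsp]].
  set (m1 := (lam * RtoC (gm * (c + s)))%C).
  set (m2 := (lam * RtoC (gm * (c - s)))%C).
  set (d := (m1 - m2)%C).
  set (D := 2 * (s * (gm * sg))).
  assert (HR1 : Re m1 = sg * gm * (c + s)) by (unfold m1; rewrite Re_mult_R; fold sg; ring).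
  assert (HR2 : Re m2 = sg * gm * (c - s)) by (unfold m2; rewrite Re_mult_R; fold sg; ring).
  assert (HD : Re d = D) by (unfold d, D; simpl Re; unfold Re in HR1, HR2 |- *;
     change (fst m1 - fst m2 = 2 * (s * (gm * sg))); rewrite HR1, HR2; ring).
  assert (HDp : 0 < D) by (unfold D; lra).
  assert (Hmm : Re m2 <= Re m1) by (rewrite HR1, HR2; unfold D in HDp; nra).
  assert (Hd0 : d <> RtoC 0) by (intros E; rewrite E in HD; simpl in HD; lra).
  assert (HdD : D <= Cmod d) by (rewrite <- HD; apply Re_le_Cmod).
  set (eps := Rabs gm / D).
  assert (Heps0 : 0 <= eps) by (unfold eps; apply Rdiv_le_0_compat; lra).
  assert (HepsT : eps * T <= 1 / 160).
  { unfold eps, D. rewrite Hsa.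
    replace (Rabs gm / (2 * (Rabs gm * Rabs sg)) * T) with (T / (2 * Rabs sg)) by (field; split; lra).
    apply Rmult_le_reg_r with (r := 2 * Rabs sg). lra.
    field_simplify; lra. }
  set (g := fun z => (RtoC (gm * cos (f z)) / d)%C).
  assert (Hg : forall z, Cmod (g z) <= eps).
  { intros z. unfold g. rewrite Cmod_div by auto. rewrite Cmod_R, Rabs_mult.
    assert (Rabs (cos (f z)) <= 1) by (apply Rabs_le; apply COS_bound).
    unfold eps. apply Rmult_le_compat. apply Rmult_le_pos; apply Rabs_pos.
    left; apply Rinv_0_lt_compat; lra. nra.
    apply Rinv_le_contravar; lra. }
  assert (E11 : forall z, Acoef c f lam z 1 1 = (m1 + m2)%C).
  { intros z. simpl. fold gm. unfold m1, m2. apply injective_projections; simpl; ring. }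
  assert (E10 : forall z, Acoef c f lam z 1 0 = (- (m1 * m2) - g z * (m1 - m2))%C).
  { intros z. simpl. fold gm. fold d. unfold g.
    replace (RtoC (gm * cos (f z)) / d * d)%C with (RtoC (gm * cos (f z))) by (field; auto).
    unfold m1, m2. destruct lam as [l1 l2].
    assert (gm * (c + s) * (gm * (c - s)) = gm) by
      (replace (gm * (c + s) * (gm * (c - s))) with (gm * (gm * (c ^ 2 - s * s))) by ring;
       rewrite Hss, Hg1; ring).
    apply injective_projections; simpl.
    assert (H1 := f_equal (fun x => x * (l1 * l1 - l2 * l2)) H). simpl in H1. lra.
    assert (H1 := f_equal (fun x => x * (l1 * l2)) H). simpl in H1. lra. }
  set (aX := (RtoC 1 / d)%C). set (bX := (m1 / d)%C).
  set (aY := (- (RtoC 1) / d)%C). set (bY := (- m2 / d)%C).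
  set (pX := fun s0 => (F s0 0%nat 0%nat * aX + F s0 0%nat 1%nat * bX)%C).
  set (qX := fun s0 => (F s0 1%nat 0%nat * aX + F s0 1%nat 1%nat * bX)%C).
  set (pY := fun s0 => (F s0 0%nat 0%nat * aY + F s0 0%nat 1%nat * bY)%C).
  set (qY := fun s0 => (F s0 1%nat 0%nat * aY + F s0 1%nat 1%nat * bY)%C).
  destruct (colcomb c f lam F aX bX HF) as [DpX DqX].
  destruct (colcomb c f lam F aY bY HF) as [DpY DqY].
  destruct (wsys pX qX (fun z => Acoef c f lam z 1 0) (fun z => Acoef c f lam z 1 1) g m1 m2
    DpX DqX E11 E10) as [DX1 DX2].
  destruct (wsys pY qY (fun z => Acoef c f lam z 1 0) (fun z => Acoef c f lam z 1 1) g m1 m2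
    DpY DqY E11 E10) as [DY1 DY2].
  set (X1 := fun s0 => (qX s0 - m2 * pX s0)%C).
  set (X2 := fun s0 => (qX s0 - m1 * pX s0)%C).
  set (Y1 := fun s0 => (qY s0 - m2 * pY s0)%C).
  set (Y2 := fun s0 => (qY s0 - m1 * pY s0)%C).
  destruct HF as [HF0 _].
  assert (F00 : F 0 0%nat 0%nat = RtoC 1) by (apply HF0; lia).
  assert (F01 : F 0 0%nat 1%nat = RtoC 0) by (apply HF0; lia).
  assert (F10 : F 0 1%nat 0%nat = RtoC 0) by (apply HF0; lia).
  assert (F11 : F 0 1%nat 1%nat = RtoC 1) by (apply HF0; lia).
  assert (IX1 : X1 0 = RtoC 1).
  { unfold X1, qX, pX, aX, bX. rewrite F00, F01, F10, F11. fold d. unfold d. field. auto. }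
  assert (IX2 : X2 0 = RtoC 0).
  { unfold X2, qX, pX, aX, bX. rewrite F00, F01, F10, F11. field. auto. }
  assert (IY1 : Y1 0 = RtoC 0).
  { unfold Y1, qY, pY, aY, bY. rewrite F00, F01, F10, F11. field. auto. }
  assert (IY2 : Y2 0 = RtoC 1).
  { unfold Y2, qY, pY, aY, bY. rewrite F00, F01, F10, F11. fold d. unfold d. field. auto. }
  assert (HT0 : 0 <= T) by lra.
  destruct (first_sol X1 X2 g m1 m2 eps T Hmm Heps0 HT0 Hg DX1 DX2 IX1 IX2) as [B1 B2].
  assert (B3 := second_sol Y1 Y2 g m1 m2 eps T Hmm Heps0 HT0 Hg DY1 DY2 IY1 IY2).
  assert (BW := wronsk X1 X2 Y1 Y2 g m1 m2 T HT0 DX1 DX2 DY1 DY2 IX1 IX2 IY1 IY2).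
  assert (Hsum : (rp + rm)%C = (X1 T + Y2 T)%C /\ (rp * rm)%C = (X1 T * Y2 T - Y1 T * X2 T)%C).
  { assert (e0 := Heig (RtoC 0)). assert (e1 := Heig (RtoC 1)).
    unfold X1, X2, Y1, Y2, qX, pX, qY, pY, aX, bX, aY, bY.
    assert (Hp' : (rp * rm = F T 0%nat 0%nat * F T 1%nat 1%nat - F T 0%nat 1%nat * F T 1%nat 0%nat)%C).
    { transitivity ((RtoC 0 - rp) * (RtoC 0 - rm))%C. ring. rewrite e0. ring. }
    assert (Hs' : (rp + rm = F T 0%nat 0%nat + F T 1%nat 1%nat)%C).
    { transitivity (RtoC 1 + rp * rm - (RtoC 1 - rp) * (RtoC 1 - rm))%C. ring.
      rewrite e1, Hp'. ring. }
    split.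
    - rewrite Hs'. fold d. unfold d. field. auto.
    - rewrite Hp'. fold d. unfold d. field. auto. }
  destruct Hsum as [Hsum Hprod].
  set (E := exp (Re m1 * T)).
  set (q := exp (- (D * T) / 2)).
  assert (HE : 0 < E) by apply exp_pos.
  set (d0 := sqrt 2 * eps * exp (eps * T) * T).
  assert (Hd0b : d0 <= 1 / 32).
  { unfold d0. assert (H1 := sqrt2_le). assert (H2 := exp_bound1 (eps * T) ltac:(lra)).
    assert (0 <= sqrt 2) by apply sqrt_pos. assert (0 < exp (eps * T)) by apply exp_pos.
    replace (sqrt 2 * eps * exp (eps * T) * T) with (sqrt 2 * exp (eps * T) * (eps * T)) by ring.
    assert (sqrt 2 * exp (eps * T) <= 9/2).
    { apply Rle_trans with (3/2 * 3). apply Rmult_le_compat; lra. lra. }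
    assert (0 <= sqrt 2 * exp (eps * T)) by nra.
    nra. }
  assert (Hd0p : 0 <= d0).
  { unfold d0. assert (0 <= sqrt 2) by apply sqrt_pos. assert (0 < exp (eps * T)) by apply exp_pos.
    apply Rmult_le_pos; [|lra]. apply Rmult_le_pos; [|lra]. nra. }
  replace (sqrt 2 * eps * exp (eps * T) * exp (Re m1 * T) * T) with (d0 * E) in B1, B2
    by (unfold d0, E; ring).
  assert (B3' : Cmod (Y1 T) <= 3 * E).
  { eapply Rle_trans. apply B3. replace ((Re m1 + eps) * T) with (eps * T + Re m1 * T) by ring.
    rewrite exp_plus. fold E. apply Rmult_le_compat_r. lra. apply exp_bound1. lra. }
  assert (BW' : Cmod (X1 T * Y2 T - Y1 T * X2 T)%C = E * E * (q * q)).
  { rewrite BW. unfold E, q. rewrite <- !exp_plus. f_equal.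
    assert (Re (m1 + m2)%C = Re m1 + Re m2) by (simpl; reflexivity).
    rewrite H. assert (Re d = Re m1 - Re m2) by (unfold d; simpl; reflexivity).
    rewrite HD in H0. replace (Re m2) with (Re m1 - D) by lra. field. }
  assert (Hq : 0 <= q <= 1 / 8).
  { split. left; apply exp_pos. unfold q.
    assert (HDT : 7 <= D * T / 2).
    { unfold D. rewrite Hsa. nra. }
    replace (- (D * T) / 2) with (- (D * T / 2)) by field.
    rewrite exp_Ropp. assert (H1 := exp_ineq1_le (D * T / 2)).
    apply Rmult_le_reg_r with (r := exp (D * T / 2)). apply exp_pos.
    rewrite Rinv_l by (apply Rgt_not_eq, exp_pos). lra. }
  assert (Hex : Cmod (ex m1 T) = E) by (rewrite Cmod_ex; reflexivity).
  assert (HX1 : E - d0 * E <= Cmod (X1 T)).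
  { assert (H := Cmod_rev (ex m1 T) (X1 T)).
    replace (ex m1 T - X1 T)%C with (- (X1 T - ex m1 T))%C in H by ring.
    rewrite Cmod_opp in H. lra. }
  assert (HY2 : Cmod (Y2 T) * (E - d0 * E) <= E * E * (q * q) + 3 * E * (d0 * E)).
  { assert (HXY : (X1 T * Y2 T)%C = ((X1 T * Y2 T - Y1 T * X2 T) + Y1 T * X2 T)%C) by ring.
    assert (H := Cmod_triangle (X1 T * Y2 T - Y1 T * X2 T)%C (Y1 T * X2 T)%C).
    rewrite <- HXY, !Cmod_mult, BW' in H.
    assert (0 <= Cmod (Y2 T)) by apply Cmod_ge_0.
    assert (0 <= Cmod (Y1 T)) by apply Cmod_ge_0.
    assert (0 <= Cmod (X2 T)) by apply Cmod_ge_0.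
    assert (Cmod (Y1 T) * Cmod (X2 T) <= 3 * E * (d0 * E)) by (apply Rmult_le_compat; lra).
    assert (Cmod (Y2 T) * (E - d0 * E) <= Cmod (Y2 T) * Cmod (X1 T)) by (apply Rmult_le_compat_l; lra).
    lra. }
  assert (Htr : Cmod ((X1 T + Y2 T) - ex m1 T)%C <= E / 4).
  { replace ((X1 T + Y2 T) - ex m1 T)%C with ((X1 T - ex m1 T) + Y2 T)%C by ring.
    eapply Rle_trans. apply Cmod_triangle.
    assert (HY2' : Cmod (Y2 T) <= E * (1/64 + 3/32) * (32/31)).
    { apply Rmult_le_reg_r with (r := E - d0 * E). nra.
      eapply Rle_trans. apply HY2.
      assert (q * q <= 1/64) by nra.
      assert (E * E * (q * q) <= E * E * (1/64)) by (apply Rmult_le_compat_l; nra).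
      assert (3 * E * (d0 * E) <= 3 * E * E * (1/32)) by nra.
      assert (E * (1 / 64 + 3 / 32) * (32 / 31) * (E - d0 * E) >= E * (1 / 64 + 3 / 32) * (32 / 31) * (E - E / 32)) by nra.
      nra. }
    nra. }
  assert (Ha : 1 < Rabs (Re m1 * T)).
  { rewrite HR1. assert (Rabs (c + s) >= m).
    { unfold s, m. destruct (Rlt_dec 0 (gm * sg)).
      apply Rle_ge, Rmin_l. replace (c + -1) with (c - 1) by ring. apply Rle_ge, Rmin_r. }
    rewrite !Rabs_mult, (Rabs_pos_eq T) by lra.
    assert (0 <= Rabs sg) by apply Rabs_pos.
    assert (Rabs gm * T * m * Rabs sg <= Rabs sg * Rabs gm * Rabs (c + s) * T).
    { replace (Rabs sg * Rabs gm * Rabs (c + s) * T) with (Rabs gm * T * Rabs (c + s) * Rabs sg) by ring.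
      apply Rmult_le_compat_r. auto. apply Rmult_le_compat_l. nra. lra. }
    lra. }
  assert (Hb : 1 < Rabs (Re m2 * T)).
  { rewrite HR2. assert (Rabs (c - s) >= m).
    { unfold s, m. destruct (Rlt_dec 0 (gm * sg)).
      apply Rle_ge, Rmin_r. replace (c - -1) with (c + 1) by ring. apply Rle_ge, Rmin_l. }
    rewrite !Rabs_mult, (Rabs_pos_eq T) by lra.
    assert (0 <= Rabs sg) by apply Rabs_pos.
    assert (Rabs gm * T * m * Rabs sg <= Rabs sg * Rabs gm * Rabs (c - s) * T).
    { replace (Rabs sg * Rabs gm * Rabs (c - s) * T) with (Rabs gm * T * Rabs (c - s) * Rabs sg) by ring.
      apply Rmult_le_compat_r. auto. apply Rmult_le_compat_l. nra. lra. }
    lra. }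
  assert (Hab : 0 < Re m1 * T * (Re m2 * T) <-> 0 < gm).
  { rewrite HR1, HR2.
    replace (sg * gm * (c + s) * T * (sg * gm * (c - s) * T)) with
      ((sg * T) ^ 2 * (gm * (gm * (c ^ 2 - s * s)))) by ring.
    rewrite Hss, Hg1, Rmult_1_r.
    assert (sg <> 0) by (intros E0; rewrite E0, Rabs_R0 in Hs80; lra).
    assert (0 < (sg * T) ^ 2) by (apply pow2_gt_0; apply Rmult_integral_contrapositive; split; lra).
    split; intros; nra. }
  assert (Key : forall r1 r2 : C, (r1 + r2)%C = (X1 T + Y2 T)%C ->
     (r1 * r2)%C = (X1 T * Y2 T - Y1 T * X2 T)%C -> Cmod r2 <= Cmod r1 ->
     sgn (ln (Cmod r1) * ln (Cmod r2)) = sgn gm).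
  { intros r1 r2 H1 H2 H3.
    assert (HR := roots r1 r2 _ _ _ E q HE Hq H1 H2 Htr Hex BW' H3).
    assert (W1 := log_window (Cmod r1) E HE HR).
    assert (lnE : ln E = Re m1 * T) by (unfold E; apply ln_exp). rewrite lnE in W1.
    assert (Hr1 : 0 < Cmod r1) by (destruct HR; lra).
    assert (HP : Cmod r1 * Cmod r2 = E * E * (q * q)) by (rewrite <- Cmod_mult, H2; auto).
    assert (Hq0 : 0 < q) by apply exp_pos.
    assert (Hr2 : 0 < Cmod r2).
    { destruct (Rle_lt_dec (Cmod r2) 0). assert (0 <= Cmod r2) by apply Cmod_ge_0.
      assert (Cmod r2 = 0) by lra. rewrite H0, Rmult_0_r in HP.
      assert (0 < E * E * (q * q)) by (apply Rmult_lt_0_compat; nra). lra. auto. }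
    assert (L2 : ln (Cmod r2) = 2 * (Re m1 * T) - D * T - ln (Cmod r1)).
    { assert (ln (Cmod r1 * Cmod r2) = ln (E * E * (q * q))) by (rewrite HP; auto).
      rewrite ln_mult in H by lra. unfold E, q in H.
      rewrite <- !exp_plus, ln_exp in H. lra. }
    assert (Re m2 = Re m1 - D) by (rewrite HR1, HR2; unfold D; ring).
    apply (sgn_final _ _ (Re m1 * T) (Re m2 * T) gm); auto.
    rewrite L2. rewrite H. lra. }
  unfold Gp. destruct (Rle_dec (Cmod rm) (Cmod rp)).
  - apply Key; auto.
  - rewrite Rmult_comm. apply Key; try lra.
    rewrite <- Hsum; ring. rewrite <- Hprod; ring.
Qed.
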